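(* Let $0<1/n_0\ll\delta\ll\alpha\ll 1$, and let $t,k,n\in\mathbb N$ with $n\geq n_0$ and $k^2-k+2\leq n\leq k^2+k+1$. Let $\mathcal H$ be an $n$-vertex hypergraph with codegree at most $t$ in which every edge has size at least $(1-\delta)\sqrt n$, and let $e,f\in\mathcal H$ be distinct edges of size at most $k$ with $V(e)\cap V(f)\neq\emptyset$ and $|V(e)\cap V(f)|\leq\alpha k$. If either (i) at least one of $e,f$ has size at most $k-1$, (ii) $|V(e)\cap V(f)|\geq 2$, or (iii) there exists a vertex in $V(e)\cap V(f)$ which is contained in at most $t/(4\delta)$ edges of size at most $k-1$, then $\{e,f\}$ is $t$-useful.
   Context: Constant hierarchies: a statement holding whenever $0<a\ll b\le 1$ means there is a non-decreasing function $f:(0,1]\to(0,1]$ such that it holds for all $a,b$ with $a\leq f(b)$; longer hierarchies are defined analogously, constants chosen from right to left. A hypergraph $\mathcal H$ has a finite vertex set $V(\mathcal H)$ and a finite set of edges, each edge $e$ with a nonempty set $V(e)\subseteq V(\mathcal H)$ (multiple edges allowed); $n$-vertex means $|V(\mathcal H)|=n$; the size of $e$ is $|V(e)|$. The codegree of $\mathcal H$ is the maximum over distinct vertices $u,v$ of the number of edges containing both. $N(e)$ is the set of edges $g\neq e$ with $V(e)\cap V(g)\neq\emptyset$. In an $n$-vertex hypergraph, a pair $\{e,f\}$ of distinct edges is $t$-useful if $V(e)\cap V(f)\neq\emptyset$ and $|N(e)\cap N(f)|\leq tn-3$. *)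

(* Defs.v *)
From HB Require Import structures.
From mathcomp Require Import all_boot all_order all_algebra.
From mathcomp Require Import reals.
Set Implicit Arguments. Unset Strict Implicit. Unset Printing Implicit Defensive.
Import Order.TTheory GRing.Theory Num.Theory.

(* A hypergraph: vertex set = the finType V (so n = #|V|), edges indexed by the
   finType E (distinct labels allow multiple edges), ve g = V(g), nonempty. *)
Definition hypergraph (V E : finType) (ve : E -> {set V}) : Prop :=
  forall g : E, ve g != set0.

Definition codegree (V E : finType) (ve : E -> {set V}) : nat :=
  \max_(p : V * V | p.1 != p.2) #|[set g : E | (p.1 \in ve g) && (p.2 \in ve g)]|.

Definition nbhd (V E : finType) (ve : E -> {set V}) (e : E) : {set E} :=
  [set g : E | (g != e) && (ve e :&: ve g != set0)].

Definition useful (V E : finType) (ve : E -> {set V}) (t : nat) (e f : E) : Prop :=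
  e != f /\ ve e :&: ve f != set0 /\
  (#|nbhd ve e :&: nbhd ve f|%:Z <= (t * #|V|)%:Z - 3)%R.

Local Open Scope ring_scope.
Definition hier_fun (R : realType) (f : R -> R) : Prop :=
  (forall x, 0 < x <= 1 -> 0 < f x <= 1) /\
  (forall x y, 0 < x -> x <= y -> y <= 1 -> f x <= f y).

(* Main.v *)
Require Import Defs.
From HB Require Import structures.
From mathcomp Require Import all_boot all_order all_algebra.
From mathcomp Require Import reals.
From mathcomp Require Import ring lra zify.
Import Order.TTheory GRing.Theory Num.Theory.
Set Implicit Arguments. Unset Strict Implicit. Unset Printing Implicit Defensive.

Lemma card_bigcup_le (T I : finType) (J : {set I}) (F : I -> {set T}) :
  #|\bigcup_(i in J) F i| <= \sum_(i in J) #|F i|.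
Proof.
elim/big_rec2: _ => [|i B n _ IH]; first by rewrite cards0.
by rewrite (leq_trans (leq_card_setU _ _)) // leq_add2l.
Qed.

Lemma card_cover (T I : finType) (X : {set T}) (J : {set I}) (F : I -> {set T}) :
  (forall g, g \in X -> exists2 i, i \in J & g \in F i) -> #|X| <= \sum_(i in J) #|F i|.
Proof.
move=> H; apply: (leq_trans _ (card_bigcup_le J F)).
apply: subset_leq_card; apply/subsetP => g /H [i iJ gF].
by apply/bigcupP; exists i.
Qed.

Lemma codeg_le (V E : finType) (ve : E -> {set V}) x y : x != y ->
  #|[set g : E | (x \in ve g) && (y \in ve g)]| <= codegree ve.
Proof.
move=> xy; rewrite /codegree.
exact: (@leq_bigmax_cond _ (fun p : V * V => p.1 != p.2) (fun p : V * V => #|[set g : E | (p.1 \in ve g) && (p.2 \in ve g)]|) (x, y) xy).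
Qed.

Lemma degsum (V E : finType) (ve : E -> {set V}) (t : nat) (v : V) (Y : {set E}) :
  (codegree ve <= t) -> (forall g, g \in Y -> v \in ve g) ->
  \sum_(g in Y) (#|ve g| - 1) <= t * (#|V| - 1).
Proof.
move=> ct HY.
have E1 : forall g, g \in Y -> #|ve g| - 1 = \sum_(w | w != v) (w \in ve g : nat).
  move=> g gY; rewrite (cardsD1 v (ve g)) HY // add1n subSS subn0.
  rewrite -sum1_card big_mkcond [RHS]big_mkcond /=; apply: eq_bigr => w _.
  by rewrite !inE; case: (w == v); case: (w \in ve g).
rewrite (eq_bigr _ E1) exchange_big /=.
have -> : (#|V| - 1 = \sum_(w | w != v) 1)%N.
  by rewrite sum1dep_card -cardsT (cardsD1 v [set: V]) in_setT add1n subSS subn0; apply: eq_card => w; rewrite !inE andbT.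
rewrite big_distrr /=; apply: leq_sum => w wv; rewrite muln1.
apply: (leq_trans _ ct); apply: leq_trans (codeg_le ve (_ : v != w)); last by rewrite eq_sym.
rewrite -sum1_card big_mkcond [X in _ <= X]big_mkcond /=.
apply: leq_sum => g _; rewrite !inE.
case gY: (g \in Y); case: (w \in ve g) => //=; by rewrite HY.
Qed.

Lemma nbhd_bound (V E : finType) (ve : E -> {set V}) (t : nat) (e f : E) :
  codegree ve <= t ->
  #|nbhd ve e :&: nbhd ve f| <=
    t * (#|ve e :\: ve f| * #|ve f :\: ve e|) +
    \sum_(v in ve e :&: ve f) #|[set g | (g != e) && (g != f) && (v \in ve g)]|.
Proof.
move=> ct.
set I := ve e :&: ve f.
set A := [set g | (g != e) && (g != f) && (ve g :&: I != set0)].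
set P := [set g | (ve g :&: (ve e :\: ve f) != set0) && (ve g :&: (ve f :\: ve e) != set0)].
have sub : nbhd ve e :&: nbhd ve f \subset A :|: P.
  apply/subsetP => g; rewrite !inE => /andP [/andP [ge eg] /andP [gf fg]].
  case gI: (ve g :&: I != set0); first by rewrite ge gf.
  apply/orP; right.
  move/negbFE/eqP: gI => gI.
  case/set0Pn: eg => x; rewrite !inE => /andP [xe xg].
  case/set0Pn: fg => y; rewrite !inE => /andP [yf yg].
  apply/andP; split; apply/set0Pn.
  - exists x; rewrite !inE xg xe andbT /=.
    apply/negP => xf; have : x \in ve g :&: I by rewrite !inE xg xe xf.
    by rewrite gI inE.
  - exists y; rewrite !inE yg yf andbT /=.
    apply/negP => ye; have : y \in ve g :&: I by rewrite !inE yg ye yf.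
    by rewrite gI inE.
apply: leq_trans (subset_leq_card sub) _.
apply: leq_trans (leq_card_setU _ _) _.
rewrite addnC; apply: leq_add.
- apply: leq_trans (card_cover (J := setX (ve e :\: ve f) (ve f :\: ve e))
     (F := fun p : V * V => [set g | (p.1 \in ve g) && (p.2 \in ve g)]) _) _.
  + move=> g; rewrite inE => /andP [/set0Pn [x] /setIP [xg xD] /set0Pn [y] /setIP [yg yD]].
    by exists (x, y); [rewrite in_setX xD yD | rewrite inE xg yg].
  + rewrite -cardsX -sum1_card big_distrr /=; apply: leq_sum => [[x y]].
    rewrite inE /= => /andP [xD yD]; rewrite muln1; apply: leq_trans ct.
    apply: codeg_le; apply/negP => /eqP xy; move: xD yD; rewrite xy !inE.
    by case: (y \in ve f); case: (y \in ve e).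
- apply: card_cover => g; rewrite inE => /andP [/andP [ge gf] /set0Pn [v /setIP [vg vI]]].
  by exists v => //; rewrite inE ge gf vg.
Qed.

Local Open Scope ring_scope.

Lemma real_deg (R : realFieldType) (d r K Nn : R) :
  0 < d -> d <= 1/16 -> r^+2 = Nn -> 0 <= r -> K - 1 < r -> r <= K + 1 -> 32 <= d * (K + 1) ->
  0 < (1 - d) * r - 1 /\ Nn - 1 <= ((1 - d) * r - 1) * (K + 2 * d * K + 4).
Proof.
move=> d0 d1 rN r0 Kr rK dK.
have K1 : 511 <= K.
  have : 32 <= (1/16) * (K + 1) by apply: le_trans dK _; apply: ler_wpM2r => //; nra.
  lra.
have c0 : 0 < (1 - d) * r - 1 by nra.
split => //.
have : ((1 - d) * r - 1) * ((r - 1) * (1 + 2 * d) + 4) <= ((1 - d) * r - 1) * (K + 2 * d * K + 4).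
  apply: ler_wpM2l; first lra.
  have : (r - 1) * (1 + 2 * d) <= K * (1 + 2 * d) by apply: ler_wpM2r; lra.
  lra.
have h1 : 0 <= (d - 2 * d^+2) * r^+2 by apply: mulr_ge0; nra.
have h2 : r <= (2 - 7 * d + 2 * d^+2) * r by nra.
have h3 : ((1 - d) * r - 1) * ((r - 1) * (1 + 2 * d) + 4) = (1 - d) * (1 + 2 * d) * r^+2 + ((1 - d) * (3 - 2 * d) - (1 + 2 * d)) * r - (3 - 2 * d) by ring.
rewrite -rN; nra.
Qed.

Lemma real_iii (R : realFieldType) (T K Nn r d Sm Bg : R) :
  1 <= T -> 0 < d -> d <= 1/16 -> 32 <= d * (K + 1) -> K - 1 < r -> r <= K + 1 ->
  K^+2 - K + 2 <= Nn -> 0 <= Sm -> 4 * d * Sm <= T -> 0 <= Bg ->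
  Sm * ((1 - d) * r - 1) + Bg * (K - 1) <= T * (Nn - 1) ->
  T * (Nn - (K - 1)^+2) <= Sm + Bg -> False.
Proof.
move=> T1 d0 d1 dK Kr rK Nn1 Sm0 SmT Bg0 Hs HW.
have K1 : 511 <= K.
  have Kp : 0 <= K + 1.
    case: (lerP 0 (K + 1)) => // h.
    have : d * (K + 1) < 0 by rewrite pmulr_rlt0.
    lra.
  have : 32 <= (1/16) * (K + 1) by apply: le_trans dK _; apply: ler_wpM2r => //.
  lra.
set W := T * (Nn - (K - 1)^+2) in HW.
have h1 : (W - Sm) * (K - 1) <= Bg * (K - 1) by apply: ler_wpM2r; lra.
have h2 : W * (K - 1) - T * (Nn - 1) <= Sm * (K - (1 - d) * r).
  have e : Sm * ((1 - d) * r - 1) + (W - Sm) * (K - 1) = W * (K - 1) - Sm * (K - (1 - d) * r) by ring.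
  lra.
have h3 : T * (K - 2) <= W * (K - 1) - T * (Nn - 1).
  have e : W * (K - 1) - T * (Nn - 1) - T * (K - 2) = T * ((Nn - (K^+2 - K + 2)) * (K - 2)) by rewrite /W; ring.
  have : 0 <= T * ((Nn - (K^+2 - K + 2)) * (K - 2)) by apply: mulr_ge0; [lra | apply: mulr_ge0; lra].
  lra.
have h4 : Sm * (K - (1 - d) * r) <= Sm * (1 + d * (K + 1)) by apply: ler_wpM2l => //; nra.
have h5 : 4 * d * (Sm * (1 + d * (K + 1))) <= T * (1 + d * (K + 1)).
  rewrite mulrA; apply: ler_wpM2r => //; nra.
have h6 : 4 * d * (T * (K - 2)) <= T * (1 + d * (K + 1)).
  apply: le_trans h5; apply: ler_wpM2l; first lra. lra.
have h7 : 4 * d * (K - 2) <= 1 + d * (K + 1).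
  have : T * (4 * d * (K - 2)) <= T * (1 + d * (K + 1)) by rewrite mulrCA mulrA; lra.
  by rewrite ler_pM2l //; lra.
nra.
Qed.

Lemma real_12 (R : realFieldType) (T K Nn s p1 p2 al d m A : R) :
  1 <= T -> 0 < d -> d <= 1/16 -> 0 < al -> al <= 1/8 -> 511 <= K ->
  K^+2 - K + 2 <= Nn -> 1 <= s -> s <= al * K -> 0 <= p1 -> 0 <= p2 ->
  [\/ 2 <= s /\ (p1 <= K - s /\ p2 <= K - s), p1 <= K - 1 - s /\ p2 <= K - s
    | p1 <= K - s /\ p2 <= K - 1 - s] ->
  m <= T * (p1 * p2) + A -> A <= s * (T * (K + 2 * d * K + 4)) -> m + 3 <= T * Nn.
Proof.
move=> T1 d0 d1 a0 a1 K1 Nn1 s1 sK p10 p20 Hc Hm HA.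
have sK8 : s <= K / 8.
  have : al * K <= 1/8 * K by apply: ler_wpM2r; lra.
  lra.
have e1 : s * s <= s * (K / 8) by apply: ler_wpM2l; lra.
have e2 : (2 * d) * (K * s) <= (1/8) * (K * s).
  apply: ler_wpM2r; first by apply: mulr_ge0; lra. lra.
have e3 : s * 32 <= s * (K / 8) by apply: ler_wpM2l; lra.
have H : p1 * p2 + s * (K + 2 * d * K + 4) <= K^+2 - K - 1.
  case: Hc => [[s2 [h1 h2]]|[h1 h2]|[h1 h2]].
  - have : p1 * p2 <= (K - s) * (K - s).
      apply: le_trans (_ : p1 * (K - s) <= _); first by apply: ler_wpM2l.
      by apply: ler_wpM2r; lra.
    nra.
  - have : p1 * p2 <= (K - 1 - s) * (K - s).
      apply: le_trans (_ : p1 * (K - s) <= _); first by apply: ler_wpM2l.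
      by apply: ler_wpM2r; lra.
    nra.
  - have : p1 * p2 <= (K - s) * (K - 1 - s).
      apply: le_trans (_ : p1 * (K - 1 - s) <= _); first by apply: ler_wpM2l.
      by apply: ler_wpM2r; lra.
    nra.
have : T * (p1 * p2 + s * (K + 2 * d * K + 4)) <= T * (K^+2 - K - 1) by apply: ler_wpM2l; lra.
have : T * (K^+2 - K + 2) <= T * Nn by apply: ler_wpM2l; lra.
nra.
Qed.

Lemma sum_lower (R : numDomainType) (E : finType) (Y : {set E}) (h : E -> R) (c : R) :
  (forall g, g \in Y -> c <= h g) -> #|Y|%:R * c <= \sum_(g in Y) h g.
Proof. by move=> H; rewrite mulr_natl -sumr_const; apply: ler_sum. Qed.


Lemma real_setup (R : realFieldType) (d K Nn r n0R : R) :
  0 < d -> d <= 1/16 -> r^+2 = Nn -> 0 <= r -> 0 <= K ->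
  K^+2 - K + 2 <= Nn -> Nn <= K^+2 + K + 1 ->
  0 < n0R -> n0R <= Nn -> n0R^-1 <= d^+2 / 1024 ->
  [/\ K - 1 < r, r <= K + 1, 32 <= d * (K + 1) & 511 <= K].
Proof.
move=> d0 dd rN r0 K0 RN1 RN2 n0p h2 n0f.
have Kr : K - 1 < r.
  case: (ltrP (K - 1) r) => // h; exfalso.
  have : r^+2 <= (K - 1)^+2 by rewrite !expr2; apply: ler_pM; lra.
  have : (K - 1)^+2 = K^+2 - 2 * K + 1 by ring.
  rewrite rN; lra.
have rK : r <= K + 1.
  case: (lerP r (K + 1)) => // h; exfalso.
  have : (K + 1)^+2 < r^+2 by rewrite !expr2; apply: ltr_pM; lra.
  have : (K + 1)^+2 = K^+2 + 2 * K + 1 by ring.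
  rewrite rN; lra.
have dK : 32 <= d * (K + 1).
  have h : n0R * n0R^-1 <= n0R * (d^+2 / 1024) by apply: ler_wpM2l => //; lra.
  rewrite mulfV in h; last by rewrite gt_eqF.
  have h3 : 1024 <= (d * (K + 1))^+2.
    have : n0R * d^+2 <= Nn * d^+2 by apply: ler_wpM2r => //; rewrite sqr_ge0.
    rewrite exprMn; have : Nn * d^+2 <= (K + 1)^+2 * d^+2.
      apply: ler_wpM2r; first by rewrite sqr_ge0. lra.
    lra.
  case: (lerP 32 (d * (K + 1))) => // h4; exfalso.
  have : 0 <= d * (K + 1) by apply: mulr_ge0; lra.
  move=> h5; have : (d * (K + 1))^+2 < 32^+2 by rewrite !expr2; apply: ltr_pM; lra.
  lra.
split => //.
have : 32 <= (1/16) * (K + 1) by apply: le_trans dK _; apply: ler_wpM2r => //; lra.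
lra.
Qed.

Lemma cg_lemma (R : realFieldType) (c : R) (m : nat) :
  0 < c -> c + 1 <= m%:R -> (1 < m)%N /\ c <= (m - 1)%:R.
Proof.
move=> c0 h.
have h1 : (1 < m)%N by rewrite -(ltr_nat R); lra.
split => //; rewrite natrB; last exact: ltnW.
lra.
Qed.

Lemma cases12 (R : realFieldType) (k s p1 p2 a b : nat) :
  (s + p1 = a)%N -> (s + p2 = b)%N -> (a <= k)%N -> (b <= k)%N ->
  [|| (a < k)%N, (b < k)%N | (2 <= s)%N] ->
  [\/ (2 <= s%:R :> R) /\ ((p1%:R <= k%:R - s%:R :> R) /\ (p2%:R <= k%:R - s%:R :> R)),
      (p1%:R <= k%:R - 1 - s%:R :> R) /\ (p2%:R <= k%:R - s%:R :> R)
    | (p1%:R <= k%:R - s%:R :> R) /\ (p2%:R <= k%:R - 1 - s%:R :> R)].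
Proof.
move=> sp1 sp2 ek fk Hc.
have ekR : (s%:R + p1%:R <= k%:R :> R) by rewrite -natrD ler_nat sp1.
have fkR : (s%:R + p2%:R <= k%:R :> R) by rewrite -natrD ler_nat sp2.
case/or3P: Hc => h.
- apply: Or32; split; last lra.
  have : (s + p1 + 1 <= k)%N by rewrite sp1 addn1.
  rewrite -(ler_nat R) !natrD; lra.
- apply: Or33; split; first lra.
  have : (s + p2 + 1 <= k)%N by rewrite sp2 addn1.
  rewrite -(ler_nat R) !natrD; lra.
- apply: Or31; split; last lra.
  by rewrite (ler_nat R 2).
Qed.

Lemma sq_le (R : realFieldType) (K N : R) : 0 <= K -> K^+2 - K + 2 <= N -> (K - 1)^+2 <= N.
Proof. move=> K0 h; have : (K - 1)^+2 = K^+2 - 2 * K + 1 by ring. lra. Qed.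

Lemma nat_fin (x a w tn tq : nat) : (x <= tq + a)%N -> (a + 2 <= w)%N -> (w < tn - tq)%N -> (x + 3 <= tn)%N.
Proof. lia. Qed.

(* Hierarchy 0 < 1/n0 << delta << alpha << 1, constants chosen right to left. *)
Theorem proposition4p6 (R : realType) :
  exists (a0 : R), 0 < a0 <= 1 /\
  exists (fd : R -> R), hier_fun fd /\
  exists (fn : R -> R), hier_fun fn /\
  forall (alpha delta : R) (n0 : nat),
    0 < alpha <= 1 -> alpha <= a0 ->
    0 < delta <= 1 -> delta <= fd alpha ->
    (0 < n0)%N -> (n0%:R)^-1 <= fn delta ->
  forall (t k n : nat) (V E : finType) (ve : E -> {set V}) (e f : E),
    #|V| = n -> (n0 <= n)%N ->
    (k ^ 2 - k + 2 <= n)%N -> (n <= k ^ 2 + k + 1)%N ->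
    hypergraph ve ->
    (codegree ve <= t)%N ->
    (forall g : E, (1 - delta) * Num.sqrt (n%:R) <= (#|ve g|%:R : R)) ->
    e != f -> (#|ve e| <= k)%N -> (#|ve f| <= k)%N ->
    ve e :&: ve f != set0 ->
    (#|ve e :&: ve f|%:R : R) <= alpha * k%:R ->
    [\/ (#|ve e| < k)%N \/ (#|ve f| < k)%N,
        (2 <= #|ve e :&: ve f|)%N
      | exists2 v : V, v \in ve e :&: ve f &
          (#|[set g : E | (v \in ve g) && (#|ve g| < k)%N]|%:R : R)
            <= t%:R / (4 * delta)] ->
    useful ve t e f.
Proof.
exists (1/8); split; first lra.
exists (fun _ => 1/16); split.
  by split => [x _|x y _ _ _]; lra.
exists (fun x => x^+2 / 1024); split.
  split => [x /andP [x0 x1]|x y x0 xy y1].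
    apply/andP; split; first by apply: divr_gt0 => //; apply: exprn_gt0.
    have : x^+2 <= 1 by rewrite expr2; apply: mulr_ile1; lra.
    lra.
  have : x^+2 <= y^+2 by rewrite !expr2; apply: ler_pM; lra.
  lra.
move=> alpha delta n0 /andP [a0 a1] aa0 /andP [d0 d1] dd n0p n0f t k n V E ve e f
  cardV n0n Hn1 Hn2 hyp ct Hsize ef ek fk I0 Is Hcases.
rewrite /= in dd n0f.
pose K : R := k%:R. pose Nn : R := n%:R. pose r : R := Num.sqrt Nn. pose T : R := t%:R.
have rN : r^+2 = Nn by rewrite /r sqr_sqrtr // ler0n.
have r0 : 0 <= r by apply: sqrtr_ge0.
have K0 : 0 <= K by rewrite /K ler0n.
have RN1 : K^+2 - K + 2 <= Nn.
  have kk : (k <= k^2)%N by case: (k) => // k'; rewrite expnS expn1 leq_pmulr.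
  have h : ((k^2 + 2)%:R <= (n + k)%:R :> R).
    have e1 : (k^2 + 2 = k^2 - k + 2 + k)%N by rewrite -addnA (addnC 2) addnA subnK.
    by rewrite ler_nat e1 leq_add2r.
  rewrite !natrD natrX in h; rewrite /K /Nn; lra.
have RN2 : Nn <= K^+2 + K + 1.
  have h : (n%:R <= (k^2 + k + 1)%:R :> R) by rewrite ler_nat.
  rewrite !natrD natrX in h; rewrite /K /Nn; lra.
have n0R : 0 < (n0%:R : R) by rewrite ltr0n.
have n0N : (n0%:R : R) <= Nn by rewrite ler_nat.
have [Kr rK dK K1] := real_setup d0 dd rN r0 K0 RN1 RN2 n0R n0N n0f.
have [c0 cQ] := real_deg d0 dd rN r0 Kr rK dK.
set c := (1 - delta) * r - 1 in c0 cQ.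
have sz : forall g, (1 - delta) * r <= #|ve g|%:R by move=> g; apply: Hsize.
have cg' : forall g, (1 < #|ve g|)%N /\ c <= (#|ve g| - 1)%:R.
  by move=> g; apply: cg_lemma => //; rewrite /c addrNK; apply: sz.
have cg : forall g, c <= (#|ve g| - 1)%:R by move=> g; case: (cg' g).
have [v0 v0I] := set0Pn _ I0.
have e2 : (1 < #|ve e|)%N by case: (cg' e).
have T1 : 1 <= T.
  rewrite /T (ler_nat R 1 t).
  have v0e : v0 \in ve e by move: v0I; rewrite inE => /andP [].
  have : (0 < #|ve e :\ v0|)%N by move: e2; rewrite (cardsD1 v0 (ve e)) v0e.
  rewrite card_gt0 => /set0Pn [w]; rewrite !inE => /andP [wv we].
  apply: leq_trans ct; apply: leq_trans (codeg_le ve (_ : v0 != w)); last by rewrite eq_sym.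
  by rewrite card_gt0; apply/set0Pn; exists e; rewrite inE v0e we.
have Hm := nbhd_bound e f ct.
set X := nbhd ve e :&: nbhd ve f in Hm *.
set I := ve e :&: ve f in Hm Is I0 Hcases v0I.
set p1 := #|ve e :\: ve f| in Hm. set p2 := #|ve f :\: ve e| in Hm.
set Av := fun v => [set g | (g != e) && (g != f) && (v \in ve g)] in Hm.
have sp1 : (#|I| + p1 = #|ve e|)%N by rewrite cardsID.
have sp2 : (#|I| + p2 = #|ve f|)%N by rewrite /I setIC cardsID.
have s1 : (1 <= #|I|)%N by rewrite card_gt0.
have degv : forall v, v \in I -> #|Av v|%:R * c <= T * (Nn - 1).
  move=> v vI.
  have h := @degsum V E ve t v (Av v) ct (fun g => ltac:(by rewrite inE => /andP [_ ->])).
  have h' : ((\sum_(g in Av v) (#|ve g| - 1))%:R <= (t * (#|V| - 1))%:R :> R) by rewrite ler_nat.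
  rewrite natr_sum natrM natrB in h'; last by rewrite cardV; apply: leq_trans n0n.
  rewrite cardV -/T -/Nn in h'.
  apply: le_trans h'; apply: sum_lower => g _; exact: cg.
suff H : (#|X| + 3 <= t * n)%N.
  split => //; split => //.
  by rewrite lerBrDr -PoszD lez_nat cardV; exact: H.
have toR : forall a b : nat, (a%:R <= b%:R :> R) -> (a <= b)%N by move=> a b; rewrite ler_nat.
case: (boolP [|| (#|ve e| < k)%N, (#|ve f| < k)%N | (2 <= #|I|)%N]) => Hc.
  apply: toR; rewrite natrD natrM -/T -/Nn.
  pose sR : R := #|I|%:R.
  have HmR : #|X|%:R <= T * (p1%:R * p2%:R) + \sum_(v in I) (#|Av v|%:R : R).
    have h : (#|X|%:R <= (t * (p1 * p2) + \sum_(v in I) #|Av v|)%:R :> R) by rewrite ler_nat.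
    by rewrite natrD !natrM natr_sum in h.
  have HA : \sum_(v in I) (#|Av v|%:R : R) <= sR * (T * (K + 2 * delta * K + 4)).
    rewrite /sR mulr_natl -sumr_const; apply: ler_sum => v vI.
    have h := degv v vI.
    have h2 : T * (Nn - 1) <= T * (c * (K + 2 * delta * K + 4)) by apply: ler_wpM2l => //; lra.
    rewrite -(ler_pM2r c0); apply: le_trans h _; apply: le_trans h2 _.
    by rewrite mulrCA mulrA [X in _ <= X]mulrC mulrA.
  have Hs1 : 1 <= sR by rewrite /sR (ler_nat R 1).
  have HsK : sR <= alpha * K by [].
  have HD := cases12 R sp1 sp2 ek fk Hc.
  apply: (real_12 T1 d0 dd a0 aa0 K1 RN1 Hs1 HsK _ _ HD HmR HA).
    exact: ler0n. exact: ler0n.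
move: Hc; rewrite !negb_or -!leqNgt => /and3P [ka kb s2].
have ea : #|ve e| = k by apply/eqP; rewrite eqn_leq ek ka.
have fb : #|ve f| = k by apply/eqP; rewrite eqn_leq fk kb.
have s1' : #|I| = 1%N by apply/eqP; rewrite eqn_leq s2 s1.
rewrite s1' ea add1n in sp1. rewrite s1' fb add1n in sp2.
have p21 : p2 = p1 by apply: succn_inj; rewrite sp1 sp2.
case: Hcases => [[h|h]|h|[v vI Hv]].
- by rewrite ea ltnn in h.
- by rewrite fb ltnn in h.
- by rewrite s1' in h.
have Iv : I = [set v] by apply/eqP; rewrite eq_sym eqEcard sub1set vI cards1 s1'.
rewrite Iv big_set1 p21 mulnn in Hm.
have [ve_e ve_f] : v \in ve e /\ v \in ve f by move: vI; rewrite inE => /andP.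
pose D := [set g | v \in ve g]. pose L := [set g | (#|ve g| < k)%N].
have HAv : (#|Av v| + 2 <= #|D|)%N.
  have sub : Av v \subset (D :\ e) :\ f.
    by apply/subsetP => g; rewrite !inE => /andP [/andP [ge gf] vg]; rewrite gf ge vg.
  have eD : e \in D by rewrite inE ve_e.
  have fD : f \in D :\ e by rewrite !inE eq_sym ef ve_f.
  rewrite (cardsD1 e D) eD (cardsD1 f (D :\ e)) fD /= add1n add1n addn2 !ltnS.
  exact: subset_leq_card sub.
rewrite -(cardsID L D) in HAv.
have hD := @degsum V E ve t v D ct (fun g => ltac:(by rewrite inE)).
rewrite (big_setID L) /= in hD.
have hDR : ((\sum_(i in D :&: L) (#|ve i| - 1) + \sum_(i in D :\: L) (#|ve i| - 1))%:R
   <= (t * (#|V| - 1))%:R :> R) by rewrite ler_nat.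
rewrite natrD !natr_sum natrM cardV (@natrB R n 1) -/T -/Nn in hDR; last by apply: leq_trans n0n.
have lb1 := sum_lower (Y := D :&: L) (fun g _ => cg g).
have lb2 : #|D :\: L|%:R * (K - 1) <= \sum_(i in D :\: L) ((#|ve i| - 1)%:R : R).
  apply: sum_lower => g; rewrite !inE -leqNgt => /andP [kg _].
  rewrite natrB; last by case: (cg' g) => /ltnW.
  by rewrite lerD2r ler_nat.
have hDR' : #|D :&: L|%:R * ((1 - delta) * r - 1) + #|D :\: L|%:R * (K - 1) <= T * (Nn - 1).
  apply: le_trans hDR; exact: lerD.
have eS : [set g | (v \in ve g) && (#|ve g| < k)%N] = D :&: L by apply/setP => g; rewrite !inE.
rewrite eS ler_pdivlMr in Hv; last by rewrite mulr_gt0.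
have H4 : 4 * delta * #|D :&: L|%:R <= T by rewrite mulrC.
have Kp1 : K = p1%:R + 1 by rewrite /K -sp1 -addn1 natrD.
have p1n : (p1 ^ 2 <= n)%N.
  rewrite -(ler_nat R) natrX -/Nn.
  have -> : (p1%:R : R) = K - 1 by rewrite Kp1 addrK.
  exact: sq_le K0 RN1.
case: (leqP (t * (n - p1 ^ 2)) (#|D :&: L| + #|D :\: L|)) => hW.
  exfalso; apply: (real_iii T1 d0 dd dK Kr rK RN1 (ler0n _ _) H4 (ler0n _ _) hDR').
  have : ((t * (n - p1 ^ 2))%:R <= (#|D :&: L| + #|D :\: L|)%:R :> R) by rewrite ler_nat.
  rewrite natrM natrB // natrX natrD -/T -/Nn.
  by have -> : (p1%:R : R) = K - 1 by rewrite Kp1 addrK.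
apply: (nat_fin Hm HAv); by rewrite -mulnBr.
Qed.
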